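(* Let $n\ge 1$ and let $\tau\ge 0$ be real. Set $\tau'=\dfrac{\tau}{(n-1)\tau+n}$. Then $$\Omega_n(\tau')\subset\tilde\Omega(\tau')\subset\Omega^n(\tau)\subset\Omega_n(n\tau),$$ where these subsets of $\mathbb{R}^n$ are defined as follows. For $\sigma\ge 0$: $\Omega_n(\sigma)$ is the set of $\omega\in\mathbb{R}^n$ for which there is $C>0$ with $\|T\omega\|_{\mathbb{Z}}\ge C\,T^{-(1+\sigma)/n}$ for every integer $T\ge 1$; $\Omega^n(\sigma)$ is the set of $\omega\in\mathbb{R}^n$ for which there is $C>0$ with $\|\langle k,\omega\rangle\|_{\mathbb{Z}}\ge C\,|k|^{-(1+\sigma)n}$ for every $k\in\mathbb{Z}^n\setminus\{0\}$; $\Omega(\sigma)$ is the set of $\omega\in\mathbb{R}^n$ for which there is $C>0$ with $T_{i+1}(\omega)\le C\,T_i(\omega)^{1+\sigma}$ for every index $i\ge 0$ for which $T_{i+1}(\omega)$ is defined; $\tilde\Omega(\sigma)$ is the set of $\omega\in\Omega(\sigma)$ such that $\langle k,\omega\rangle\notin\mathbb{Z}$ for every $k\in\mathbb{Z}^n\setminus\{0\}$.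
   Context: For $\omega=(\omega_1,\dots,\omega_n)\in\mathbb{R}^n$, $|\omega|=\max_i|\omega_i|$, $\langle\cdot,\cdot\rangle$ is the standard scalar product, $\|\omega\|_{\mathbb{Z}}=\min_{k\in\mathbb{Z}^n}|\omega-k|$, and for $x\in\mathbb{R}$, $\|x\|_{\mathbb{Z}}=\min_{k\in\mathbb{Z}}|x-k|$. The periods $T_i(\omega)$ of $\omega$ are defined by $T_0(\omega)=1$ and $T_{i+1}(\omega)=\min\{T\in\mathbb{N},\,T\ge1 : \|T\omega\|_{\mathbb{Z}}<\|T_i(\omega)\omega\|_{\mathbb{Z}}\}$ (the sequence stops if this set is empty, which happens only when $\omega$ is rational). *)

(* Defs.v *)
(* concrete reals R. Vectors of R^n are functions nat -> R,
   only the coordinates 0..n-1 are used; integer vectors are nat -> Z. *)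
From Stdlib Require Import Reals Lra Lia ZArith.
Open Scope R_scope.

(* floor x = Int_part x;  ||x||_Z = min_{k in Z} |x - k|, attained at floor or floor+1 *)
Definition distZ (x : R) : R :=
  Rmin (x - IZR (Int_part x)) (IZR (Int_part x) + 1 - x).

(* max of f 0, ..., f (n-1) (0 for n = 0; all values used are >= 0) *)
Fixpoint vmax (n : nat) (f : nat -> R) : R :=
  match n with
  | O => 0
  | S m => Rmax (vmax m f) (f m)
  end.

Fixpoint vsum (n : nat) (f : nat -> R) : R :=
  match n with
  | O => 0
  | S m => vsum m f + f m
  end.

(* ||omega||_Z = min_{k in Z^n} max_i |omega_i - k_i| = max_i ||omega_i||_Z *)
Definition vdistZ (n : nat) (w : nat -> R) : R := vmax n (fun i => distZ (w i)).

Definition vscale (T : nat) (w : nat -> R) : nat -> R := fun i => INR T * w i.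

Definition znorm (n : nat) (k : nat -> Z) : R := vmax n (fun i => Rabs (IZR (k i))).

Definition zdot (n : nat) (k : nat -> Z) (w : nat -> R) : R :=
  vsum n (fun i => IZR (k i) * w i).

Definition znonzero (n : nat) (k : nat -> Z) : Prop :=
  exists i, (i < n)%nat /\ k i <> 0%Z.

(* Period n w i T : T is the i-th period T_i(w) (defined). *)
Inductive Period (n : nat) (w : nat -> R) : nat -> nat -> Prop :=
| Period0 : Period n w 0 1
| PeriodS : forall i Ti T,
    Period n w i Ti ->
    (1 <= T)%nat ->
    vdistZ n (vscale T w) < vdistZ n (vscale Ti w) ->
    (forall T', (1 <= T')%nat -> (T' < T)%nat ->
        ~ (vdistZ n (vscale T' w) < vdistZ n (vscale Ti w))) ->
    Period n w (S i) T.

Definition Omega_low (n : nat) (s : R) (w : nat -> R) : Prop :=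
  exists C, 0 < C /\ forall T : nat, (1 <= T)%nat ->
    vdistZ n (vscale T w) >= C * Rpower (INR T) (- (1 + s) / INR n).

Definition Omega_up (n : nat) (s : R) (w : nat -> R) : Prop :=
  exists C, 0 < C /\ forall k : nat -> Z, znonzero n k ->
    distZ (zdot n k w) >= C * Rpower (znorm n k) (- ((1 + s) * INR n)).

Definition Omega_per (n : nat) (s : R) (w : nat -> R) : Prop :=
  exists C, 0 < C /\ forall i Ti Ti1,
    Period n w i Ti -> Period n w (S i) Ti1 ->
    INR Ti1 <= C * Rpower (INR Ti) (1 + s).

Definition Omega_tilde (n : nat) (s : R) (w : nat -> R) : Prop :=
  Omega_per n s w /\
  forall k : nat -> Z, znonzero n k -> forall m : Z, zdot n k w <> IZR m.

(* Main.v *)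
Require Import Defs.
From Stdlib Require Import Reals Lra Lia ZArith Classical.
Open Scope R_scope.

Lemma distZ_le (x : R) (m : Z) : distZ x <= Rabs (x - IZR m).
Proof.
  unfold distZ. destruct (base_Int_part x) as [H1 H2].
  set (f := Int_part x) in *.
  destruct (Z_le_gt_dec m f) as [Hm|Hm].
  - apply IZR_le in Hm. eapply Rle_trans; [apply Rmin_l|].
    rewrite Rabs_right; lra.
  - assert (Hm' : (f + 1 <= m)%Z) by lia. apply IZR_le in Hm'.
    rewrite plus_IZR in Hm'. eapply Rle_trans; [apply Rmin_r|].
    rewrite Rabs_left1; lra.
Qed.

Definition nz (x : R) : Z :=
  if Rle_dec (x - IZR (Int_part x)) (IZR (Int_part x) + 1 - x)
  then Int_part x else (Int_part x + 1)%Z.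

Lemma distZ_nz (x : R) : distZ x = Rabs (x - IZR (nz x)).
Proof.
  unfold distZ, nz. destruct (base_Int_part x) as [H1 H2].
  destruct (Rle_dec _ _) as [H|H].
  - rewrite Rmin_left by lra. rewrite Rabs_right; lra.
  - rewrite Rmin_right by lra. rewrite plus_IZR. rewrite Rabs_left1; lra.
Qed.

Lemma distZ_ge0 x : 0 <= distZ x.
Proof. rewrite distZ_nz. apply Rabs_pos. Qed.

Lemma distZ_le_half x : distZ x <= /2.
Proof.
  unfold distZ. destruct (base_Int_part x) as [H1 H2].
  destruct (Rle_dec (x - IZR (Int_part x)) (IZR (Int_part x) + 1 - x)).
  - rewrite Rmin_left; lra.
  - rewrite Rmin_right; lra.
Qed.

Lemma distZ_shift x m : distZ (x + IZR m) = distZ x.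
Proof.
  apply Rle_antisym.
  - rewrite (distZ_nz x). eapply Rle_trans; [apply (distZ_le _ (nz x + m))|].
    rewrite plus_IZR. right. f_equal. ring.
  - rewrite (distZ_nz (x + IZR m)). eapply Rle_trans; [apply (distZ_le _ (nz (x + IZR m) - m))|].
    rewrite minus_IZR. right. f_equal. ring.
Qed.

Lemma distZ_opp x : distZ (- x) = distZ x.
Proof.
  apply Rle_antisym.
  - rewrite (distZ_nz x). eapply Rle_trans; [apply (distZ_le _ (- nz x))|].
    rewrite opp_IZR. rewrite <- Rabs_Ropp. right. f_equal. ring.
  - rewrite (distZ_nz (-x)). eapply Rle_trans; [apply (distZ_le _ (- nz (-x)))|].
    rewrite opp_IZR. rewrite <- Rabs_Ropp. right. f_equal. ring.
Qed.

Lemma distZ_add x y : distZ (x + y) <= distZ x + distZ y.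
Proof.
  rewrite (distZ_nz x), (distZ_nz y).
  eapply Rle_trans; [apply (distZ_le _ (nz x + nz y))|].
  rewrite plus_IZR. eapply Rle_trans; [|apply Rabs_triang]. right. f_equal. ring.
Qed.

Lemma distZ_mulZ (z : Z) x : distZ (IZR z * x) <= Rabs (IZR z) * distZ x.
Proof.
  rewrite (distZ_nz x). eapply Rle_trans; [apply (distZ_le _ (z * nz x))|].
  rewrite mult_IZR, <- Rabs_mult. right. f_equal. ring.
Qed.

Lemma distZ_abs x : distZ x <= Rabs x.
Proof. eapply Rle_trans; [apply (distZ_le _ 0)|]. right. f_equal. simpl. ring. Qed.

Lemma distZ_small x : Rabs x <= /2 -> distZ x = Rabs x.
Proof.
  intro H. apply Rle_antisym; [apply distZ_abs|].
  rewrite (distZ_nz x). destruct (Z.eq_dec (nz x) 0) as [E|E].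
  - rewrite E. right. f_equal. simpl; ring.
  - assert (1 <= Rabs (IZR (nz x))).
    { rewrite Rabs_Zabs. apply IZR_le. lia. }
    pose proof (Rabs_triang_inv (IZR (nz x)) x).
    replace (x - IZR (nz x)) with (- (IZR (nz x) - x)) by ring. rewrite Rabs_Ropp. lra.
Qed.

Lemma distZ_zero x : distZ x = 0 -> x = IZR (nz x).
Proof.
  rewrite distZ_nz. intro H. destruct (Rcase_abs (x - IZR (nz x))).
  - rewrite Rabs_left in H; lra.
  - rewrite Rabs_right in H; lra.
Qed.

Lemma distZ_mult_nat (T : nat) x : INR T * distZ x <= /2 -> distZ (INR T * x) = INR T * distZ x.
Proof.
  intro H. rewrite (distZ_nz x) in *.
  replace (INR T * x) with (INR T * (x - IZR (nz x)) + IZR (Z.of_nat T * nz x)).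
  2:{ rewrite mult_IZR, <- INR_IZR_INZ. ring. }
  rewrite distZ_shift. rewrite distZ_small.
  - rewrite Rabs_mult, Rabs_right; [reflexivity| apply Rle_ge, pos_INR].
  - rewrite Rabs_mult, Rabs_right; [exact H| apply Rle_ge, pos_INR].
Qed.

Lemma vmax_ge n f i : (i < n)%nat -> f i <= vmax n f.
Proof.
  induction n; intro H; [lia|]. simpl.
  destruct (Nat.eq_dec i n) as [->|Hi]; [apply Rmax_r|].
  eapply Rle_trans; [apply IHn; lia| apply Rmax_l].
Qed.

Lemma vmax_ge0 n f : 0 <= vmax n f.
Proof. induction n; simpl; [lra|]. eapply Rle_trans; [apply IHn|apply Rmax_l]. Qed.

Lemma vmax_le n f b : 0 <= b -> (forall i, (i < n)%nat -> f i <= b) -> vmax n f <= b.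
Proof.
  intros Hb. induction n; intro H; simpl; [lra|].
  apply Rmax_lub; [apply IHn; intros; apply H; lia| apply H; lia].
Qed.

Lemma vmax_lt n f b : 0 < b -> (forall i, (i < n)%nat -> f i < b) -> vmax n f < b.
Proof.
  intros Hb. induction n; intro H; simpl; [lra|].
  apply Rmax_lub_lt; [apply IHn; intros; apply H; lia| apply H; lia].
Qed.

Lemma vsum_le n f b : (forall i, (i < n)%nat -> f i <= b) -> vsum n f <= INR n * b.
Proof.
  induction n; intro H; cbn [vsum]; [simpl; lra|].
  rewrite S_INR. assert (vsum n f <= INR n * b) by (apply IHn; intros; apply H; lia).
  assert (f n <= b) by (apply H; lia). lra.
Qed.

Lemma vsum_mono n f g : (forall i, (i < n)%nat -> f i <= g i) -> vsum n f <= vsum n g.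
Proof.
  induction n; intro H; simpl; [lra|].
  assert (vsum n f <= vsum n g) by (apply IHn; intros; apply H; lia).
  assert (f n <= g n) by (apply H; lia). lra.
Qed.

Lemma vsum_ext n f g : (forall i, (i < n)%nat -> f i = g i) -> vsum n f = vsum n g.
Proof.
  induction n; intro H; simpl; [lra|].
  rewrite IHn by (intros; apply H; lia). rewrite H by lia. reflexivity.
Qed.

Lemma vsum_scale n f c : c * vsum n f = vsum n (fun i => c * f i).
Proof. induction n; simpl; [ring|]. rewrite <- IHn. ring. Qed.

Lemma vsum_add n f g : vsum n f + vsum n g = vsum n (fun i => f i + g i).
Proof. induction n; simpl; [ring|]. rewrite <- IHn. ring. Qed.

Lemma vsum_split n f j : (j < n)%nat ->
  vsum n f = vsum n (fun i => if Nat.eqb i j then 0 else f i) + f j.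
Proof.
  induction n; intro H; [lia|]. simpl.
  destruct (Nat.eq_dec j n) as [->|Hj].
  - rewrite Nat.eqb_refl.
    rewrite (vsum_ext n (fun i => if Nat.eqb i n then 0 else f i) f).
    + ring.
    + intros i Hi. destruct (Nat.eqb_spec i n); [lia|reflexivity].
  - rewrite (IHn ltac:(lia)). destruct (Nat.eqb_spec n j); [lia|]. ring.
Qed.



Lemma distZ_vsum n f : distZ (vsum n f) <= vsum n (fun i => distZ (f i)).
Proof.
  induction n; simpl.
  - rewrite (distZ_small 0); rewrite Rabs_R0; lra.
  - eapply Rle_trans; [apply distZ_add|]. lra.
Qed.

Lemma pigeon M (f : nat -> nat) :
  (forall x, (x <= M)%nat -> (f x < M)%nat) -> exists x y, (x < y <= M)%nat /\ f x = f y.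
Proof.
  revert f. induction M; intros f Hf.
  - specialize (Hf 0%nat ltac:(lia)). lia.
  - destruct (classic (exists x, (x <= M)%nat /\ f x = f (S M))) as [[x [Hx E]]|N].
    + exists x, (S M). split; [lia|exact E].
    + set (c := f (S M)).
      set (g := fun x => if Nat.ltb (f x) c then f x else (f x - 1)%nat).
      destruct (IHM g) as [x [y [Hxy E]]].
      * intros x Hx. unfold g. assert (f x <> c) by (intro; apply N; eauto).
        pose proof (Hf x ltac:(lia)). assert (c < S M)%nat by (apply Hf; lia).
        destruct (Nat.ltb_spec (f x) c); lia.
      * exists x, y. split; [lia|].
        assert (f x <> c) by (intro; apply N; exists x; split; [lia|auto]).
        assert (f y <> c) by (intro; apply N; exists y; split; [lia|auto]).
        unfold g in E. destruct (Nat.ltb_spec (f x) c); destruct (Nat.ltb_spec (f y) c); lia.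
Qed.

Definition dig (B c i : nat) : nat := ((c / B ^ i) mod B)%nat.

Lemma dig_diff B n : (0 < B)%nat -> forall c1 c2, (c1 < B ^ n)%nat -> (c2 < B ^ n)%nat -> c1 <> c2 ->
  exists i, (i < n)%nat /\ dig B c1 i <> dig B c2 i.
Proof.
  intro HB. induction n; intros c1 c2 H1 H2 Hne.
  - simpl in *. lia.
  - destruct (Nat.eq_dec (c1 mod B) (c2 mod B)) as [E|E].
    + assert (c1 / B <> c2 / B)%nat.
      { intro E2. apply Hne. rewrite (Nat.div_mod c1 B), (Nat.div_mod c2 B) by lia. lia. }
      assert (c1 / B < B ^ n)%nat. { apply Nat.Div0.div_lt_upper_bound. simpl in H1. lia. }
      assert (c2 / B < B ^ n)%nat. { apply Nat.Div0.div_lt_upper_bound. simpl in H2. lia. }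
      destruct (IHn _ _ H0 H3 H) as [i [Hi D]]. exists (S i). split; [lia|].
      unfold dig in *. simpl. rewrite <- !Nat.Div0.div_div. exact D.
    + exists 0%nat. split; [lia|]. unfold dig. rewrite Nat.pow_0_r, !Nat.div_1_r. exact E.
Qed.

Lemma dig_lt B c i : (0 < B)%nat -> (dig B c i < B)%nat.
Proof. intro. unfold dig. apply Nat.mod_upper_bound. lia. Qed.

Fixpoint nsum (d : nat) (f : nat -> nat) : nat :=
  match d with O => O | S m => (nsum m f + f m)%nat end.

Definition code (q d : nat) (b : nat -> nat) : nat := nsum d (fun i => b i * q ^ i)%nat.

Lemma code_lt q d b : (forall i, (i < d)%nat -> (b i < q)%nat) -> (code q d b < q ^ d)%nat.
Proof.
  unfold code. induction d; intro H; simpl; [lia|].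
  assert (nsum d (fun i => b i * q ^ i) < q ^ d)%nat by (apply IHd; intros; apply H; lia).
  assert (b d < q)%nat by (apply H; lia).
  assert (b d * q^d + q^d <= q * q^d)%nat by nia. lia.
Qed.

Lemma div_uniq a b a' b' m : (a < m)%nat -> (a' < m)%nat -> (a + b * m = a' + b' * m)%nat -> a = a' /\ b = b'.
Proof.
  intros. destruct (Nat.lt_total b b') as [L|[L|L]].
  - assert (b * m + m <= b' * m)%nat by nia. lia.
  - subst. lia.
  - assert (b' * m + m <= b * m)%nat by nia. lia.
Qed.

Lemma code_inj q d b b' : (forall i, (i < d)%nat -> (b i < q)%nat) -> (forall i, (i < d)%nat -> (b' i < q)%nat) ->
  code q d b = code q d b' -> forall i, (i < d)%nat -> b i = b' i.
Proof.
  induction d; intros Hb Hb' E i Hi; [lia|].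
  assert (L1 : (code q d b < q ^ d)%nat) by (apply code_lt; intros; apply Hb; lia).
  assert (L2 : (code q d b' < q ^ d)%nat) by (apply code_lt; intros; apply Hb'; lia).
  unfold code in E. simpl in E. fold (code q d b) (code q d b') in E.
  destruct (div_uniq _ _ _ _ _ L1 L2 E) as [E1 E2].
  destruct (Nat.eq_dec i d) as [->|Hid].
  - assert (0 < q ^ d)%nat by lia. apply (Nat.mul_cancel_r _ _ (q ^ d)); lia.
  - apply IHd; auto; try (intros; apply Hb || apply Hb'; lia); lia.
Qed.

Lemma Int_part_range (y : R) (q : nat) : 0 <= y < INR q ->
  (0 <= Int_part y)%Z /\ (Int_part y < Z.of_nat q)%Z.
Proof.
  intros [H1 H2]. destruct (base_Int_part y) as [A B].
  split.
  - assert (-1 < IZR (Int_part y)) by lra. apply lt_IZR in H. lia.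
  - apply lt_IZR. rewrite <- INR_IZR_INZ. lra.
Qed.

Lemma dirichlet d (v : nat -> R) (q : nat) : (1 <= q)%nat ->
  exists T, (1 <= T <= q ^ d)%nat /\ forall i, (i < d)%nat -> distZ (INR T * v i) < / INR q.
Proof.
  intro Hq.
  assert (Hq' : 0 < INR q) by (apply lt_0_INR; lia).
  set (fr := fun T i => frac_part (INR T * v i)).
  set (bx := fun T i => Z.to_nat (Int_part (INR q * fr T i))).
  assert (Hr : forall T i, 0 <= INR q * fr T i < INR q).
  { intros T i. unfold fr. destruct (base_fp (INR T * v i)). split; [nra|].
    rewrite <- (Rmult_1_r (INR q)) at 2. apply Rmult_lt_compat_l; lra. }
  assert (Hb : forall T i, (bx T i < q)%nat).
  { intros T i. unfold bx. destruct (Int_part_range _ _ (Hr T i)). lia. }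
  destruct (pigeon (q ^ d) (fun T => code q d (bx T))) as [T1 [T2 [HT E]]].
  { intros x _. apply code_lt. intros; apply Hb. }
  assert (Hbe := code_inj q d (bx T1) (bx T2) (fun i _ => Hb T1 i) (fun i _ => Hb T2 i) E).
  exists (T2 - T1)%nat. split; [lia|].
  intros i Hi. specialize (Hbe i Hi). unfold bx in Hbe.
  destruct (Int_part_range _ _ (Hr T1 i)). destruct (Int_part_range _ _ (Hr T2 i)).
  assert (EI : Int_part (INR q * fr T1 i) = Int_part (INR q * fr T2 i)) by lia.
  destruct (base_Int_part (INR q * fr T1 i)) as [A1 B1].
  destruct (base_Int_part (INR q * fr T2 i)) as [A2 B2].
  rewrite EI in A1, B1.
  assert (Hd : Rabs (fr T2 i - fr T1 i) < / INR q).
  { apply (Rmult_lt_reg_l (INR q)); [lra|]. rewrite Rinv_r by lra.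
    rewrite <- (Rabs_right (INR q)) at 1 by lra. rewrite <- Rabs_mult.
    apply Rabs_def1; lra. }
  unfold fr, frac_part in Hd.
  rewrite minus_INR by lia.
  replace ((INR T2 - INR T1) * v i) with
    ((INR T2 * v i - IZR (Int_part (INR T2 * v i)) - (INR T1 * v i - IZR (Int_part (INR T1 * v i))))
     + IZR (Int_part (INR T2 * v i) - Int_part (INR T1 * v i))) by (rewrite minus_IZR; ring).
  rewrite distZ_shift. eapply Rle_lt_trans; [apply distZ_abs|exact Hd].
Qed.

Lemma nat_above (x : R) : 0 <= x -> exists q : nat, (1 <= q)%nat /\ x < INR q /\ INR q <= x + 1.
Proof.
  intro Hx. destruct (base_Int_part x) as [A B].
  assert (H0 : (0 <= Int_part x)%Z). { assert (-1 < IZR (Int_part x)) by lra. apply lt_IZR in H. lia. }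
  exists (S (Z.to_nat (Int_part x))). rewrite S_INR, INR_IZR_INZ, Z2Nat.id by lia.
  split; [lia|]. lra.
Qed.

Lemma minimal (P : nat -> Prop) : (exists T, P T) -> exists T, P T /\ forall T', (T' < T)%nat -> ~ P T'.
Proof.
  intros [T HT]. revert HT. induction T as [T IH] using lt_wf_ind. intro HT.
  destruct (classic (exists T', (T' < T)%nat /\ P T')) as [[T' [H1 H2]]|N].
  - exact (IH T' H1 H2).
  - exists T. split; [exact HT|]. intros T' H1 H2. apply N. eauto.
Qed.

Lemma dir_vd n w q : (1 <= q)%nat ->
  exists T, (1 <= T <= q ^ n)%nat /\ vdistZ n (vscale T w) < / INR q.
Proof.
  intro Hq. destruct (dirichlet n w q Hq) as [T [HT H]]. exists T. split; [exact HT|].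
  apply vmax_lt; [apply Rinv_0_lt_compat, lt_0_INR; lia|]. intros i Hi. apply H, Hi.
Qed.

Section Per.
Variable n : nat.
Variable w : nat -> R.
Local Notation vd T := (vdistZ n (vscale T w)).

Lemma period_det i a b : Period n w i a -> Period n w i b -> a = b.
Proof.
  intro Ha. revert b. induction Ha as [|i Ti T HP IH H1 H2 H3]; intros b Hb.
  - inversion Hb. reflexivity.
  - inversion Hb as [|i' Ti' T' HP' H1' H2' H3']; subst.
    specialize (IH _ HP'). subst Ti'.
    destruct (Nat.lt_total T b) as [L|[L|L]]; [|exact L|].
    + exfalso. exact (H3' T H1 L H2).
    + exfalso. exact (H3 b H1' L H2').
Qed.

Lemma period_pos i Ti : Period n w i Ti -> (1 <= Ti)%nat.
Proof. intro H; inversion H; lia. Qed.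

Lemma period_gap i Ti Ti1 : Period n w i Ti -> Period n w (S i) Ti1 ->
  forall T, (1 <= T)%nat -> (T < Ti1)%nat -> vd Ti <= vd T.
Proof.
  intros H H' T H1 H2. inversion H' as [|i' Ti' T' HP' H1' H2' H3']; subst.
  rewrite (period_det _ _ _ H HP'). apply Rnot_lt_le. exact (H3' T H1 H2).
Qed.

Lemma period_next_lt i Ti Ti1 : Period n w i Ti -> Period n w (S i) Ti1 -> vd Ti1 < vd Ti.
Proof.
  intros H H'. inversion H' as [|i' Ti' T' HP' H1' H2' H3']; subst.
  rewrite (period_det _ _ _ H HP'). exact H2'.
Qed.

Lemma period_inv i Ti : Period n w i Ti -> forall T, (1 <= T)%nat -> (T < Ti)%nat -> vd Ti < vd T.
Proof.
  intro H. induction H as [|i Ti T HP IH H1 H2 H3]; intros T' HT1 HT2; [lia|].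
  pose proof (H3 T' HT1 HT2). lra.
Qed.

Lemma period_incr i Ti Ti1 : Period n w i Ti -> Period n w (S i) Ti1 -> (Ti < Ti1)%nat.
Proof.
  intros H H'. pose proof (period_next_lt _ _ _ H H').
  destruct (Nat.lt_total Ti Ti1) as [L|[L|L]]; [exact L| subst; lra|].
  pose proof (period_inv _ _ H Ti1 (period_pos _ _ H') L). lra.
Qed.

Lemma period_exists : (1 <= n)%nat -> (forall T, (1 <= T)%nat -> 0 < vd T) ->
  forall i, exists Ti, Period n w i Ti.
Proof.
  intros Hn Hpos. induction i as [|i [Ti HTi]]; [exists 1%nat; constructor|].
  pose proof (Hpos Ti (period_pos _ _ HTi)) as Hd.
  destruct (nat_above (/ vd Ti)) as [q [Hq1 [Hq2 _]]]; [left; apply Rinv_0_lt_compat, Hd|].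
  destruct (dir_vd n w q Hq1) as [T [HT HT']].
  assert (Hlt : vd T < vd Ti).
  { eapply Rlt_le_trans; [exact HT'|]. rewrite <- (Rinv_inv (vd Ti)).
    apply Rinv_le_contravar; [apply Rinv_0_lt_compat, Hd|lra]. }
  destruct (minimal (fun T => (1 <= T)%nat /\ vd T < vd Ti)) as [T0 [[H1 H2] H3]].
  { exists T. split; [lia|exact Hlt]. }
  exists T0. econstructor; [exact HTi|exact H1|exact H2|].
  intros T' A B C. apply (H3 T' B). split; assumption.
Qed.

Lemma period_ge i Ti : Period n w i Ti -> (i + 1 <= Ti)%nat.
Proof.
  intro H. induction H as [|i Ti T HP IH H1 H2 H3]; [lia|].
  assert (Ti < T)%nat; [|lia].
  apply (period_incr i); [exact HP|]. econstructor; eassumption.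
Qed.

Lemma period_bracket : (1 <= n)%nat -> (forall T, (1 <= T)%nat -> 0 < vd T) ->
  forall N, (1 <= N)%nat -> exists i Ti Ti1, Period n w i Ti /\ Period n w (S i) Ti1 /\ (Ti <= N < Ti1)%nat.
Proof.
  intros Hn Hpos N HN.
  destruct (minimal (fun j => exists Tj, Period n w j Tj /\ (N < Tj)%nat)) as [j [[Tj [HPj HNj]] Hmin]].
  { destruct (period_exists Hn Hpos N) as [TN HTN]. exists N, TN. split; [exact HTN|].
    pose proof (period_ge _ _ HTN). lia. }
  destruct j as [|i].
  - inversion HPj; subst. lia.
  - destruct (period_exists Hn Hpos i) as [Ti HTi]. exists i, Ti, Tj.
    split; [exact HTi|]. split; [exact HPj|]. split; [|exact HNj].
    destruct (Nat.le_gt_cases Ti N) as [L|L]; [exact L|].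
    exfalso. apply (Hmin i); [lia|]. exists Ti; auto.
Qed.
End Per.

Lemma ln_le_mono x y : 0 < x -> x <= y -> ln x <= ln y.
Proof. intros H [L|E]; [left; apply ln_increasing; lra|subst; lra]. Qed.

Lemma le_of_ln x y : 0 < x -> 0 < y -> ln x <= ln y -> x <= y.
Proof.
  intros Hx Hy [L|E]; [left; apply ln_lt_inv; assumption|right; apply ln_inv; assumption].
Qed.

Lemma Rpower_pos' x y : 0 < Rpower x y.
Proof. unfold Rpower. apply exp_pos. Qed.

Lemma ln_Rpower x y : ln (Rpower x y) = y * ln x.
Proof. unfold Rpower. apply ln_exp. Qed.

Lemma ln_CR C x y : 0 < C -> ln (C * Rpower x y) = ln C + y * ln x.
Proof. intro. rewrite ln_mult by (auto; apply Rpower_pos'). rewrite ln_Rpower. ring. Qed.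

Lemma INRpos (T : nat) : (1 <= T)%nat -> 0 < INR T.
Proof. intro. apply lt_0_INR. lia. Qed.

Lemma ln_INR_ge0 (T : nat) : (1 <= T)%nat -> 0 <= ln (INR T).
Proof. intro. rewrite <- ln_1. apply ln_le_mono; [lra|]. apply (le_INR 1); lia. Qed.

Lemma nat_root n T : (1 <= n)%nat -> (1 <= T)%nat -> exists H, (1 <= H)%nat /\ (H ^ n <= T < (S H) ^ n)%nat.
Proof.
  intros Hn HT.
  destruct (minimal (fun j => (T < (S j) ^ n)%nat)) as [j [Hj Hmin]].
  { exists T. destruct n; [lia|]. simpl. pose proof (Nat.pow_lower_bound (S T) n ltac:(lia)). nia. }
  destruct j as [|j].
  - rewrite Nat.pow_1_l in Hj. lia.
  - exists (S j). split; [lia|]. split; [|exact Hj].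
    destruct (Nat.le_gt_cases (S j ^ n) T) as [L|L]; [exact L|]. exfalso. exact (Hmin j ltac:(lia) L).
Qed.

Fixpoint zsum (d : nat) (f : nat -> Z) : Z :=
  match d with O => 0%Z | S m => (zsum m f + f m)%Z end.

Lemma IZR_zsum d f : IZR (zsum d f) = vsum d (fun i => IZR (f i)).
Proof. induction d; simpl; [reflexivity|]. rewrite plus_IZR, IHd. reflexivity. Qed.

Lemma zsum_sub d f g : (zsum d f - zsum d g)%Z = zsum d (fun i => f i - g i)%Z.
Proof. induction d; simpl; [reflexivity|]. rewrite <- IHd. ring. Qed.

Lemma Rabs_vsum n f : Rabs (vsum n f) <= vsum n (fun i => Rabs (f i)).
Proof.
  induction n; simpl; [rewrite Rabs_R0; lra|].
  eapply Rle_trans; [apply Rabs_triang|]. lra.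
Qed.

Lemma znorm_ge1 n k : znonzero n k -> 1 <= znorm n k.
Proof.
  intros [i [Hi Hk]]. eapply Rle_trans; [|apply (vmax_ge _ (fun i => Rabs (IZR (k i))) i Hi)].
  simpl. rewrite Rabs_Zabs. apply IZR_le. lia.
Qed.

Lemma znorm_ge n k i : (i < n)%nat -> Rabs (IZR (k i)) <= znorm n k.
Proof. intro Hi. apply (vmax_ge _ (fun i => Rabs (IZR (k i))) i Hi). Qed.

Lemma vd_ge n T w i : (i < n)%nat -> distZ (INR T * w i) <= vdistZ n (vscale T w).
Proof. intro Hi. apply (vmax_ge _ (fun i => distZ (vscale T w i)) i Hi). Qed.

Lemma zsum_ext d f g : (forall i, (i < d)%nat -> f i = g i) -> zsum d f = zsum d g.
Proof. induction d; intro H; simpl; [reflexivity|]. rewrite IHd by (intros; apply H; lia). rewrite H by lia. reflexivity. Qed.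

Lemma incl3 n tau : (1 <= n)%nat -> 0 <= tau ->
  forall w, Omega_up n tau w -> Omega_low n (INR n * tau) w.
Proof.
  intros Hn Htau w [C [HC HCk]].
  assert (Hn' : 0 < INR n) by (apply INRpos; lia).
  exists (C / INR n). split; [apply Rdiv_lt_0_compat; lra|].
  intros T HT.
  set (δ := vdistZ n (vscale T w)).
  destruct (nat_root n T Hn HT) as [H [HH1 [HH2 HH3]]].
  set (B := S H).
  set (p := fun i => nz (INR T * w i)).
  set (S := fun c => zsum n (fun i => Z.of_nat (dig B c i) * p i)%Z).
  set (Tz := Z.of_nat T).
  assert (HTz : (0 < Tz)%Z) by (unfold Tz; lia).
  destruct (pigeon T (fun c => Z.to_nat (S c mod Tz))) as [c1 [c2 [Hc E]]].
  { intros x _. pose proof (Z.mod_pos_bound (S x) Tz HTz). unfold Tz in *. lia. }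
  assert (Emod : (S c1 mod Tz = S c2 mod Tz)%Z).
  { pose proof (Z.mod_pos_bound (S c1) Tz HTz). pose proof (Z.mod_pos_bound (S c2) Tz HTz). lia. }
  destruct (dig_diff B n ltac:(unfold B; lia) c2 c1) as [i0 [Hi0 Hd0]]; try (unfold B; lia).
  set (k := fun i => (Z.of_nat (dig B c2 i) - Z.of_nat (dig B c1 i))%Z).
  assert (Hnz : znonzero n k). { exists i0. split; [exact Hi0|]. unfold k. lia. }
  assert (Hkb : forall i, Rabs (IZR (k i)) <= INR H).
  { intro i. rewrite Rabs_Zabs, INR_IZR_INZ. apply IZR_le. unfold k.
    pose proof (dig_lt B c1 i ltac:(unfold B; lia)). pose proof (dig_lt B c2 i ltac:(unfold B; lia)).
    unfold B in *. lia. }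
  assert (HK : znorm n k <= INR H).
  { apply vmax_le; [apply pos_INR|]. intros; apply Hkb. }
  assert (HK1 := znorm_ge1 n k Hnz).
  assert (Hsum : zsum n (fun i => k i * p i)%Z = (S c2 - S c1)%Z).
  { unfold S. rewrite zsum_sub. apply zsum_ext. intros i _. unfold k. ring. }
  set (s := (S c2 / Tz - S c1 / Tz)%Z).
  assert (Hs : zsum n (fun i => k i * p i)%Z = (Tz * s)%Z).
  { rewrite Hsum. unfold s. pose proof (Z.div_mod (S c1) Tz ltac:(lia)).
    pose proof (Z.div_mod (S c2) Tz ltac:(lia)). nia. }
  set (eps := fun i => INR T * w i - IZR (p i)).
  assert (Heps : forall i, (i < n)%nat -> Rabs (eps i) <= δ).
  { intros i Hi. unfold eps, p. rewrite <- distZ_nz. apply vd_ge, Hi. }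
  assert (HT' := INRpos T HT).
  assert (Hzd : zdot n k w = IZR s + vsum n (fun i => IZR (k i) * eps i) / INR T).
  { apply (Rmult_eq_reg_l (INR T)); [|lra].
    unfold zdot. rewrite vsum_scale.
    replace (INR T * (IZR s + vsum n (fun i => IZR (k i) * eps i) / INR T))
      with (IZR (Tz * s) + vsum n (fun i => IZR (k i) * eps i)).
    2:{ rewrite mult_IZR. unfold Tz. rewrite <- INR_IZR_INZ. field. lra. }
    rewrite <- Hs, IZR_zsum, vsum_add. apply vsum_ext. intros i _.
    rewrite mult_IZR. unfold eps. ring. }
  assert (Hup : distZ (zdot n k w) <= INR n * INR H * δ / INR T).
  { rewrite Hzd, Rplus_comm, distZ_shift. eapply Rle_trans; [apply distZ_abs|].
    unfold Rdiv. rewrite Rabs_mult, (Rabs_right (/ INR T)) by (apply Rle_ge; left; apply Rinv_0_lt_compat; lra).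
    apply Rmult_le_compat_r; [left; apply Rinv_0_lt_compat; lra|].
    eapply Rle_trans; [apply Rabs_vsum|]. rewrite Rmult_assoc. apply vsum_le.
    intros i Hi. rewrite Rabs_mult. apply Rmult_le_compat; try apply Rabs_pos; auto. }
  pose proof (HCk k Hnz) as Hlow.
  assert (Hpos : 0 < C * Rpower (znorm n k) (- ((1 + tau) * INR n)))
    by (apply Rmult_lt_0_compat; [lra|apply Rpower_pos']).
  assert (HH' : 1 <= INR H) by (apply (le_INR 1); lia).
  assert (Hδ : 0 < δ).
  { assert (0 < INR n * INR H * δ / INR T) by lra.
    destruct (Rle_or_lt δ 0) as [L|L]; [|exact L].
    exfalso. assert (INR n * INR H * δ <= 0).
    { assert (0 < INR n * INR H) by nra. nra. }
    assert (INR n * INR H * δ / INR T <= 0); [|lra].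
    unfold Rdiv. assert (0 < / INR T) by (apply Rinv_0_lt_compat; lra). nra. }
  assert (F1 : ln C + - ((1 + tau) * INR n) * ln (znorm n k) <= ln (INR n) + ln (INR H) + ln δ - ln (INR T)).
  { rewrite <- ln_CR by lra.
    replace (ln (INR n) + ln (INR H) + ln δ - ln (INR T)) with (ln (INR n * INR H * δ / INR T)).
    2:{ unfold Rdiv. rewrite !ln_mult, ln_Rinv. all: try ring. all: try lra. all: try nra. all: try (apply Rinv_0_lt_compat; lra).
       apply Rmult_lt_0_compat; [nra|lra]. }
    apply ln_le_mono; [exact Hpos|]. lra. }
  assert (FK : ln (znorm n k) <= ln (INR H)) by (apply ln_le_mono; lra).
  assert (F3 : INR n * ln (INR H) <= ln (INR T)).
  { rewrite <- ln_pow by lra. rewrite <- pow_INR. apply ln_le_mono.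
    - rewrite pow_INR. apply pow_lt. lra.
    - apply le_INR. exact HH2. }
  apply Rle_ge. apply le_of_ln; [apply Rmult_lt_0_compat; [apply Rdiv_lt_0_compat; lra|apply Rpower_pos']|exact Hδ|].
  rewrite ln_CR by (apply Rdiv_lt_0_compat; lra).
  unfold Rdiv at 1. rewrite ln_mult, ln_Rinv by (try apply Rinv_0_lt_compat; lra).
  apply (Rmult_le_reg_l (INR n)); [exact Hn'|].
  replace (INR n * (ln C + - ln (INR n) + - (1 + INR n * tau) / INR n * ln (INR T)))
    with (INR n * (ln C - ln (INR n)) - (1 + INR n * tau) * ln (INR T)) by (field; lra).
  assert (G0 : INR n * (ln C + - ((1 + tau) * INR n) * ln (znorm n k)) <=
               INR n * (ln (INR n) + ln (INR H) + ln δ - ln (INR T))) by (apply Rmult_le_compat_l; lra).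
  assert (G1 : 0 <= (1 + tau) * INR n * INR n * (ln (INR H) - ln (znorm n k))).
  { apply Rmult_le_pos; [|lra]. apply Rmult_le_pos; [|lra]. apply Rmult_le_pos; lra. }
  assert (G2 : 0 <= (INR n + 1 + INR n * tau) * (ln (INR T) - INR n * ln (INR H))).
  { apply Rmult_le_pos; [|lra]. assert (0 <= INR n * tau) by (apply Rmult_le_pos; lra). lra. }
  lra.
Qed.

Lemma zdot_scale n k T w : INR T * zdot n k w = zdot n k (vscale T w).
Proof. unfold zdot, vscale. rewrite vsum_scale. apply vsum_ext. intros; ring. Qed.

Lemma zdot_bound n k T w : distZ (zdot n k (vscale T w)) <= INR n * (znorm n k * vdistZ n (vscale T w)).
Proof.
  unfold zdot. eapply Rle_trans; [apply distZ_vsum|]. apply vsum_le. intros i Hi.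
  eapply Rle_trans; [apply distZ_mulZ|]. apply Rmult_le_compat; try apply Rabs_pos; try apply distZ_ge0.
  - apply znorm_ge, Hi.
  - apply (vd_ge n T w i Hi).
Qed.

Lemma vsum_zero n f : (forall i, (i < n)%nat -> f i = 0) -> vsum n f = 0.
Proof. induction n; intro H; simpl; [reflexivity|]. rewrite IHn, H by (try intros; try apply H; lia). ring. Qed.

Lemma irr_vd_pos n w : (1 <= n)%nat ->
  (forall k, znonzero n k -> forall m, zdot n k w <> IZR m) ->
  forall T, (1 <= T)%nat -> 0 < vdistZ n (vscale T w).
Proof.
  intros Hn Hirr T HT.
  destruct (Rle_lt_or_eq_dec 0 _ (vmax_ge0 n (fun i => distZ (vscale T w i)))) as [L|E]; [exact L|].
  exfalso.
  assert (H0 : distZ (INR T * w 0%nat) = 0).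
  { pose proof (vd_ge n T w 0 ltac:(lia)). pose proof (distZ_ge0 (INR T * w 0%nat)).
    unfold vdistZ in *. lra. }
  apply distZ_zero in H0.
  set (k := fun i => if Nat.eqb i 0 then Z.of_nat T else 0%Z).
  assert (Hk : znonzero n k). { exists 0%nat. split; [lia|]. unfold k. simpl. lia. }
  apply (Hirr k Hk (nz (INR T * w 0%nat))).
  - unfold zdot. rewrite (vsum_split n _ 0 ltac:(lia)). rewrite vsum_zero.
    + unfold k. simpl. rewrite <- INR_IZR_INZ. rewrite Rplus_0_l. exact H0.
    + intros i Hi. unfold k. destruct (Nat.eqb_spec i 0); [reflexivity|]. ring.
Qed.

Lemma gap_bound n w i Ti Ti1 : (1 <= n)%nat -> Period n w i Ti -> Period n w (S i) Ti1 ->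
  0 < vdistZ n (vscale Ti w) ->
  INR n * ln (vdistZ n (vscale Ti w)) + ln (INR Ti1) <= INR n * ln 2.
Proof.
  intros Hn HP HP1 Hd.
  pose proof (period_incr n w i Ti Ti1 HP HP1) as Hinc. pose proof (period_pos n w i Ti HP) as Hpos.
  destruct (nat_root n (Ti1 - 1) Hn ltac:(lia)) as [H [H1 [H2 H3]]].
  destruct (dir_vd n w H H1) as [T [HT HT']].
  pose proof (period_gap n w i Ti Ti1 HP HP1 T ltac:(lia) ltac:(lia)) as Hg.
  assert (HH : 1 <= INR H) by (apply (le_INR 1); lia).
  assert (Ld : ln (vdistZ n (vscale Ti w)) <= - ln (INR H)).
  { rewrite <- ln_Rinv by lra. apply ln_le_mono; [exact Hd|lra]. }
  assert (LT : ln (INR Ti1) <= INR n * ln 2 + INR n * ln (INR H)).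
  { rewrite <- !ln_pow by lra. rewrite <- ln_mult by (apply pow_lt; lra). rewrite <- Rpow_mult_distr.
    apply ln_le_mono; [apply INRpos; lia|].
    apply Rle_trans with (INR (S H ^ n)).
    - apply le_INR. lia.
    - rewrite pow_INR, S_INR. apply pow_incr. lra. }
  assert (INR n * ln (vdistZ n (vscale Ti w)) <= INR n * (- ln (INR H))) by (apply Rmult_le_compat_l; [apply pos_INR|exact Ld]).
  lra.
Qed.

Lemma Rpower_le1 K e : 1 <= K -> e <= 0 -> Rpower K e <= 1.
Proof.
  intros HK He. apply le_of_ln; [apply Rpower_pos'|lra|]. rewrite ln_Rpower, ln_1.
  assert (0 <= ln K) by (rewrite <- ln_1; apply ln_le_mono; lra). nra.
Qed.

Lemma incl2 n tau tau' : (1 <= n)%nat -> 0 <= tau -> tau' = tau / ((INR n - 1) * tau + INR n) ->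
  forall w, Omega_tilde n tau' w -> Omega_up n tau w.
Proof.
  intros Hn Htau Htp w [[C0 [HC0 Hper]] Hirr].
  pose proof (irr_vd_pos n w Hn Hirr) as Hpos.
  assert (Hn1 : 1 <= INR n) by (apply (le_INR 1); lia).
  set (D := (INR n - 1) * tau + INR n).
  assert (HD : 0 < D) by (unfold D; nra).
  assert (Htp0 : 0 <= tau') by (rewrite Htp; apply Rmult_le_pos; [lra|left; apply Rinv_0_lt_compat; exact HD]).
  set (u := 1 + tau').
  assert (Hu : 0 < u) by (unfold u; lra).
  set (c := / u + / INR n).
  assert (Hc : 0 < c) by (unfold c; assert (0 < / u) by (apply Rinv_0_lt_compat; lra);
                          assert (0 < / INR n) by (apply Rinv_0_lt_compat; lra); lra).
  assert (Hkey : c = 1 + / (INR n * (1 + tau))).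
  { unfold c, u. rewrite Htp. unfold D. field.
    unfold D in HD. repeat split; nra. }
  set (Λ := - (INR n * (1 + tau)) * (ln (INR n) + ln 2 + / u * ln C0 + c * ln 2)).
  exists (Rmin (/ 4) (exp Λ)). split; [apply Rmin_pos; [lra|apply exp_pos]|].
  intros k Hnz.
  pose proof (znorm_ge1 n k Hnz) as HK1.
  set (K := znorm n k) in *.
  set (z := zdot n k w).
  set (η := distZ z).
  assert (Hη : 0 < η).
  { destruct (Rle_lt_or_eq_dec 0 η (distZ_ge0 z)) as [L|E]; [exact L|].
    exfalso. apply (Hirr k Hnz (nz z)). apply distZ_zero. unfold η in E. lra. }
  set (e := - ((1 + tau) * INR n)).
  assert (He : e <= 0) by (unfold e; nra).
  pose proof (Rpower_le1 K e HK1 He) as HRp.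
  pose proof (Rpower_pos' K e) as HRp0.
  apply Rle_ge.
  destruct (Rle_or_lt (/ 4) η) as [Hbig|Hsmall].
  { apply Rle_trans with (/ 4 * 1); [|lra].
    apply Rmult_le_compat; [left; apply Rmin_pos; [lra|apply exp_pos]|lra|apply Rmin_l|exact HRp]. }
  apply Rle_trans with (exp Λ * Rpower K e).
  { apply Rmult_le_compat_r; [lra|apply Rmin_r]. }
  destruct (nat_above (/ (2 * η))) as [q [Hq1 [Hq2 Hq3]]].
  { left. apply Rinv_0_lt_compat. lra. }
  assert (Hinv : 2 < / (2 * η)).
  { apply (Rmult_lt_reg_l (2 * η)); [lra|]. rewrite Rinv_r by lra. lra. }
  assert (Hq4 : (3 <= q)%nat).
  { destruct (le_lt_dec 3 q) as [L|L]; [exact L|]. exfalso.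
    assert (INR q <= 2) by (replace 2 with (INR 2) by (simpl; ring); apply le_INR; lia). lra. }
  set (N := (q - 1)%nat).
  assert (HN : INR N = INR q - 1) by (unfold N; rewrite minus_INR by lia; simpl; ring).
  destruct (period_bracket n w Hn Hpos N ltac:(unfold N; lia)) as [i [Ti [Ti1 [HP [HP1 [HTiN HNTi1]]]]]].
  pose proof (period_pos n w i Ti HP) as HTi1.
  set (δ := vdistZ n (vscale Ti w)).
  assert (Hδ : 0 < δ) by (apply Hpos; exact HTi1).
  assert (HTi : 0 < INR Ti) by (apply INRpos; exact HTi1).
  assert (HTi1' : 0 < INR Ti1) by (apply INRpos; lia).
  assert (L1 : INR Ti * η <= INR n * (K * δ)).
  { assert (A : INR Ti * η <= / 2).
    { assert (INR Ti <= INR N) by (apply le_INR; exact HTiN).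
      apply Rle_trans with (INR N * η); [apply Rmult_le_compat_r; lra|].
      assert (HH : INR N * (2 * η) <= / (2 * η) * (2 * η)) by (apply Rmult_le_compat_r; lra).
      rewrite Rinv_l in HH by lra. lra. }
    unfold η in *. rewrite <- distZ_mult_nat by exact A. unfold z. rewrite zdot_scale.
    apply zdot_bound. }
  assert (L1' : ln (INR Ti) + ln η <= ln (INR n) + ln K + ln δ).
  { rewrite <- !ln_mult by (try apply Rmult_lt_0_compat; lra).
    apply ln_le_mono; [apply Rmult_lt_0_compat; lra|]. rewrite Rmult_assoc. exact L1. }
  pose proof (gap_bound n w i Ti Ti1 Hn HP HP1 Hδ) as L2. fold δ in L2.
  assert (L3 : ln (INR Ti1) <= ln C0 + u * ln (INR Ti)).
  { rewrite <- ln_CR by lra. apply ln_le_mono; [exact HTi1'|]. apply Hper with i; assumption. }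
  assert (L4 : - ln 2 - ln η <= ln (INR Ti1)).
  { replace (- ln 2 - ln η) with (ln (/ (2 * η))) by (rewrite ln_Rinv, ln_mult; lra).
    apply ln_le_mono; [apply Rinv_0_lt_compat; lra|].
    assert (INR N + 1 <= INR Ti1) by (rewrite <- S_INR; apply le_INR; lia). lra. }
  assert (S1 : / u * ln (INR Ti1) <= / u * ln C0 + ln (INR Ti)).
  { replace (ln (INR Ti)) with (/ u * (u * ln (INR Ti))) at 1 by (field; lra).
    rewrite <- Rmult_plus_distr_l. apply Rmult_le_compat_l; [left; apply Rinv_0_lt_compat; lra|lra]. }
  assert (S2 : ln δ <= ln 2 - / INR n * ln (INR Ti1)).
  { replace (ln δ) with (/ INR n * (INR n * ln δ)) by (field; lra).
    replace (ln 2 - / INR n * ln (INR Ti1)) with (/ INR n * (INR n * ln 2 - ln (INR Ti1))) by (field; lra).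
    apply Rmult_le_compat_l; [left; apply Rinv_0_lt_compat; lra|lra]. }
  assert (S3 : c * (- ln 2 - ln η) <= c * ln (INR Ti1)) by (apply Rmult_le_compat_l; lra).
  assert (S4 : - / (INR n * (1 + tau)) * ln η <= ln (INR n) + ln K + ln 2 + / u * ln C0 + c * ln 2).
  { assert (E1 : c * ln (INR Ti1) = / u * ln (INR Ti1) + / INR n * ln (INR Ti1)) by (unfold c; ring).
    assert (E2 : c * ln η = ln η + / (INR n * (1 + tau)) * ln η) by (rewrite Hkey; ring).
    assert (E3 : c * (- ln 2 - ln η) = - (c * ln 2) - c * ln η) by ring.
    lra. }
  set (P := INR n * (1 + tau)) in *.
  assert (HP0 : 0 < P) by (unfold P; nra).
  assert (S5 : P * (- / P * ln η) <= P * (ln (INR n) + ln K + ln 2 + / u * ln C0 + c * ln 2))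
    by (apply Rmult_le_compat_l; [lra|]; idtac "X"; lra).
  replace (P * (- / P * ln η)) with (- ln η) in S5 by (field; lra).
  apply le_of_ln; [apply Rmult_lt_0_compat; [apply exp_pos|exact HRp0]|exact Hη|].
  rewrite ln_mult by (try apply exp_pos; exact HRp0). rewrite ln_exp, ln_Rpower.
  unfold Λ, e. fold P. replace ((1 + tau) * INR n) with P by (unfold P; ring).
  lra.
Qed.

Lemma vd_le_half n T w : vdistZ n (vscale T w) <= / 2.
Proof. apply vmax_le; [lra|]. intros; apply distZ_le_half. Qed.

Lemma incl1_per n tau' : (1 <= n)%nat -> 0 <= tau' ->
  forall w, Omega_low n tau' w -> Omega_per n tau' w.
Proof.
  intros Hn Htp w [C [HC HCT]].
  assert (Hn' : 0 < INR n) by (apply INRpos; lia).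
  exists (exp (INR n * (ln 2 - ln C))). split; [apply exp_pos|].
  intros i Ti Ti1 HP HP1.
  pose proof (period_pos n w i Ti HP) as HTi1.
  pose proof (period_incr n w i Ti Ti1 HP HP1) as Hinc.
  set (δ := vdistZ n (vscale Ti w)).
  pose proof (HCT Ti HTi1) as Hlow. fold δ in Hlow.
  assert (Hpos : 0 < C * Rpower (INR Ti) (- (1 + tau') / INR n)) by (apply Rmult_lt_0_compat; [lra|apply Rpower_pos']).
  assert (Hδ : 0 < δ) by lra.
  assert (Hδ2 : δ <= / 2) by apply vd_le_half.
  destruct (nat_above (/ δ)) as [q [Hq1 [Hq2 Hq3]]]; [left; apply Rinv_0_lt_compat; lra|].
  destruct (dir_vd n w q Hq1) as [T [HT HT']].
  assert (HTge : (Ti1 <= T)%nat).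
  { destruct (le_lt_dec Ti1 T) as [L|L]; [exact L|]. exfalso.
    pose proof (period_gap n w i Ti Ti1 HP HP1 T ltac:(lia) L). fold δ in H.
    assert (/ INR q < δ); [|lra].
    rewrite <- (Rinv_inv δ). apply Rinv_lt_contravar; [|exact Hq2].
    apply Rmult_lt_0_compat; [apply Rinv_0_lt_compat; lra|apply INRpos; lia]. }
  assert (Hq' : 0 < INR q) by (apply INRpos; lia).
  assert (Hqb : INR q <= 2 * / δ).
  { assert (/ / 2 <= / δ) by (apply Rinv_le_contravar; lra). rewrite Rinv_inv in H. lra. }
  assert (L1 : ln (INR Ti1) <= INR n * ln (INR q)).
  { rewrite <- ln_pow by lra. rewrite <- pow_INR. apply ln_le_mono; [apply INRpos; lia|].
    apply le_INR. lia. }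
  assert (L2 : ln (INR q) <= ln 2 - ln δ).
  { replace (ln 2 - ln δ) with (ln (2 * / δ)).
    - apply ln_le_mono; lra.
    - rewrite ln_mult, ln_Rinv; try lra. all: apply Rinv_0_lt_compat; lra. }
  assert (L3 : ln C + - (1 + tau') / INR n * ln (INR Ti) <= ln δ).
  { rewrite <- ln_CR by lra. apply ln_le_mono; lra. }
  assert (L3' : INR n * ln C - (1 + tau') * ln (INR Ti) <= INR n * ln δ).
  { replace (INR n * ln C - (1 + tau') * ln (INR Ti)) with (INR n * (ln C + - (1 + tau') / INR n * ln (INR Ti))) by (field; lra).
    apply Rmult_le_compat_l; lra. }
  assert (L2' : INR n * ln (INR q) <= INR n * (ln 2 - ln δ)) by (apply Rmult_le_compat_l; lra).
  apply le_of_ln; [apply INRpos; lia|apply Rmult_lt_0_compat; [apply exp_pos|apply Rpower_pos']|].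
  rewrite ln_mult by (try apply exp_pos; apply Rpower_pos'). rewrite ln_exp, ln_Rpower.
  lra.
Qed.

Lemma distZ_0 : distZ 0 = 0.
Proof. rewrite distZ_small; rewrite Rabs_R0; lra. Qed.

Lemma distZ_absZ z x : distZ (IZR (Z.abs z) * x) = distZ (IZR z * x).
Proof.
  destruct (Z_le_gt_dec 0 z).
  - rewrite Z.abs_eq by lia. reflexivity.
  - rewrite Z.abs_neq by lia. rewrite opp_IZR, <- distZ_opp. f_equal. ring.
Qed.

Lemma rel_approx n w k m j q : (j < n)%nat -> k j <> 0%Z -> zdot n k w = IZR m -> (1 <= q)%nat ->
  exists T, (1 <= T)%nat /\ INR T <= znorm n k * INR q ^ (n - 1) /\
            vdistZ n (vscale T w) <= INR n * (znorm n k * / INR q).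
Proof.
  intros Hj Hkj Hzm Hq.
  set (idx := fun i => if Nat.ltb i j then i else S i).
  destruct (dirichlet (n - 1) (fun i => w (idx i)) q Hq) as [T' [HT' Hd]].
  assert (Hq' : 0 < INR q) by (apply INRpos; lia).
  assert (Hiq : 0 < / INR q) by (apply Rinv_0_lt_compat; lra).
  assert (Hoff : forall i, (i < n)%nat -> i <> j -> distZ (INR T' * w i) < / INR q).
  { intros i Hi Hij. destruct (lt_dec i j) as [L|L].
    - specialize (Hd i ltac:(lia)). unfold idx in Hd. destruct (Nat.ltb_spec i j); [exact Hd|lia].
    - specialize (Hd (i - 1)%nat ltac:(lia)). unfold idx in Hd.
      destruct (Nat.ltb_spec (i - 1) j); [lia|]. replace (S (i - 1)) with i in Hd by lia. exact Hd. }
  set (a := Z.abs_nat (k j)).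
  assert (Ha : INR a = IZR (Z.abs (k j))) by (unfold a; rewrite INR_IZR_INZ, Nat2Z.inj_abs_nat; reflexivity).
  assert (Ha1 : (1 <= a)%nat) by (unfold a; lia).
  pose proof (znorm_ge n k j Hj) as HKj. rewrite Rabs_Zabs in HKj.
  set (K := znorm n k) in *.
  exists (a * T')%nat. split; [nia|]. split.
  - rewrite mult_INR, Ha. apply Rmult_le_compat; [apply IZR_le; lia|apply pos_INR|exact HKj|].
    rewrite <- pow_INR. apply le_INR. lia.
  - assert (Hn1 : 1 <= INR n) by (apply (le_INR 1); lia).
    assert (HK0 : 0 <= K * / INR q) by (apply Rmult_le_pos; [pose proof (IZR_le 0 (Z.abs (k j)) (Z.abs_nonneg _)); lra|lra]).
    apply vmax_le; [apply Rmult_le_pos; lra|].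
    intros i Hi. unfold vscale. rewrite mult_INR, Ha, Rmult_assoc.
    destruct (Nat.eq_dec i j) as [->|Hij].
    + rewrite distZ_absZ.
      set (S' := vsum n (fun i => if Nat.eqb i j then 0 else IZR (k i) * (INR T' * w i))).
      assert (E : IZR (k j) * (INR T' * w j) = - S' + IZR (Z.of_nat T' * m)).
      { rewrite mult_IZR, <- INR_IZR_INZ, <- Hzm, zdot_scale. unfold zdot at 1.
        rewrite (vsum_split n _ j Hj). unfold S', vscale. ring. }
      rewrite E, distZ_shift, distZ_opp. unfold S'.
      eapply Rle_trans; [apply distZ_vsum|]. apply vsum_le. intros i Hi'.
      destruct (Nat.eqb_spec i j) as [_|Hij']; [rewrite distZ_0; exact HK0|].
      eapply Rle_trans; [apply distZ_mulZ|].
      apply Rmult_le_compat; [apply Rabs_pos|apply distZ_ge0|apply znorm_ge; exact Hi'|left; apply Hoff; assumption].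
    + eapply Rle_trans; [apply distZ_mulZ|].
      rewrite Rabs_Zabs, Z.abs_idemp.
      apply Rle_trans with (K * / INR q); [|nra].
      apply Rmult_le_compat; [apply IZR_le; lia|apply distZ_ge0|exact HKj|left; apply Hoff; assumption].
Qed.

Lemma incl1_irr n tau tau' : (1 <= n)%nat -> 0 <= tau -> tau' = tau / ((INR n - 1) * tau + INR n) ->
  forall w, Omega_low n tau' w -> forall k, znonzero n k -> forall m, zdot n k w <> IZR m.
Proof.
  intros Hn Htau Htp w [C [HC HCT]] k Hnz m Hzm.
  destruct Hnz as [j [Hj Hkj]] eqn:Hnz'. clear Hnz'.
  pose proof (znorm_ge1 n k Hnz) as HK1.
  set (K := znorm n k) in *.
  assert (Hn1 : 1 <= INR n) by (apply (le_INR 1); lia).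
  set (D := (INR n - 1) * tau + INR n) in *.
  assert (HD : 0 < D) by (unfold D; nra).
  assert (Htp0 : 0 <= tau') by (rewrite Htp; apply Rmult_le_pos; [lra|left; apply Rinv_0_lt_compat; exact HD]).
  set (A := (1 + tau') / INR n).
  assert (HA : 0 <= A) by (unfold A; apply Rmult_le_pos; [lra|left; apply Rinv_0_lt_compat; lra]).
  assert (Heps : 1 - A * (INR n - 1) = / D).
  { unfold A. rewrite Htp. unfold D. field. unfold D in HD. split; lra. }
  set (Mq := ln (INR n) + (1 + A) * ln K - ln C).
  destruct (nat_above (exp (Mq * D))) as [q [Hq1 [Hq2 _]]]; [left; apply exp_pos|].
  assert (Hlq : Mq * D < ln (INR q)).
  { rewrite <- (ln_exp (Mq * D)). apply ln_increasing; [apply exp_pos|exact Hq2]. }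
  destruct (rel_approx n w k m j q Hj Hkj Hzm Hq1) as [T [HT1 [HT2 HT3]]]. fold K in HT2, HT3.
  pose proof (HCT T HT1) as Hlow.
  assert (Hq' : 0 < INR q) by (apply INRpos; lia).
  assert (HT' : 0 < INR T) by (apply INRpos; lia).
  assert (F1 : ln C + - (1 + tau') / INR n * ln (INR T) <= ln (INR n) + ln K - ln (INR q)).
  { rewrite <- ln_CR by lra.
    replace (ln (INR n) + ln K - ln (INR q)) with (ln (INR n * (K * / INR q))).
    2:{ rewrite !ln_mult, ln_Rinv; try lra. all: try apply Rinv_0_lt_compat; try apply Rmult_lt_0_compat; try lra.
        apply Rinv_0_lt_compat; lra. }
    apply ln_le_mono; [apply Rmult_lt_0_compat; [lra|apply Rpower_pos']|lra]. }
  assert (F2 : ln (INR T) <= ln K + (INR n - 1) * ln (INR q)).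
  { replace (INR n - 1) with (INR (n - 1)) by (rewrite minus_INR by lia; simpl; ring). rewrite <- ln_pow by lra. rewrite <- ln_mult by (try apply pow_lt; lra).
    apply ln_le_mono; lra. }
  assert (E1 : - (1 + tau') / INR n * ln (INR T) = - (A * ln (INR T))) by (unfold A; field; lra).
  assert (F2' : A * ln (INR T) <= A * (ln K + (INR n - 1) * ln (INR q))) by (apply Rmult_le_compat_l; lra).
  assert (E2 : A * (INR n - 1) * ln (INR q) = ln (INR q) - / D * ln (INR q)).
  { replace (A * (INR n - 1)) with (1 - / D) by lra. ring. }
  assert (F3 : / D * ln (INR q) <= Mq) by (unfold Mq; lra).
  assert (F4 : D * (/ D * ln (INR q)) <= D * Mq) by (apply Rmult_le_compat_l; lra).
  replace (D * (/ D * ln (INR q))) with (ln (INR q)) in F4 by (field; lra).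
  lra.
Qed.

Theorem mainTheorem1 (n : nat) (tau : R) :
  (1 <= n)%nat -> 0 <= tau ->
  let tau' := tau / ((INR n - 1) * tau + INR n) in
  (forall w, Omega_low n tau' w -> Omega_tilde n tau' w) /\
  (forall w, Omega_tilde n tau' w -> Omega_up n tau w) /\
  (forall w, Omega_up n tau w -> Omega_low n (INR n * tau) w).
Proof.
  intros Hn Htau tau'.
  assert (Hn1 : 1 <= INR n) by (apply (le_INR 1); lia).
  assert (Htp0 : 0 <= tau').
  { unfold tau'. apply Rmult_le_pos; [lra|left; apply Rinv_0_lt_compat; nra]. }
  split; [|split].
  - intros w Hw. split.
    + apply incl1_per; assumption.
    + apply (incl1_irr n tau tau'); auto.
  - apply (incl2 n tau tau'); auto.
  - apply incl3; assumption.
Qed.
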